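(* Let $Q\in S$ be nonzero and $\mathbf u\in\mathbb Z^n_{>0}$. The following are equivalent: (1) $Q$ is quasi-homogeneous with respect to $\mathbf u$, i.e. $Q\in(S^{\mathbf u})_d$ for some $d$; (2) for every $\mathbf v\in\mathbb Z^n$ such that $\mathbf u+\mathbf v=(k,\dots,k)$ for some $k\in\mathbb Z$, $D(Q)$ is a graded $S^{\mathbf u}$-submodule of $D^{(\mathbf u,\mathbf v)}$ (i.e. all homogeneous components of every element of $D(Q)$ belong to $D(Q)$).
   Context: $\mathbb K$ a field of characteristic zero, $S=\mathbb K[x_1,\dots,x_n]$, $D=\mathrm{Der}_{\mathbb K}(S)$ with basis $\partial_i=\partial/\partial x_i$. For $g\in S$, $e\ge1$: $D(g;e)=\{\delta\in D:\delta(g)\in g^eS\}$; for nonzero $f=cf_1^{e_1}\cdots f_r^{e_r}$ (pairwise non-associate irreducibles, $c\in\mathbb K^*$), $D(f)=\bigcap_iD(f_i;e_i)$. $S^{\mathbf u}$ is $S$ with grading $\deg x_i=u_i$; $D^{(\mathbf u,\mathbf v)}$ is $D$ graded by $\deg(a\partial_i)=\deg^{\mathbf u}(a)+v_i$ for $\mathbf u$-homogeneous $a$. *)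

(* Defs.v *)
From HB Require Import structures.
From mathcomp Require Import all_boot all_order all_algebra.
From mathcomp Require Export mpoly.
Set Implicit Arguments. Unset Strict Implicit. Unset Printing Implicit Defensive.
Import Order.TTheory GRing.Theory Num.Theory.
Local Open Scope ring_scope.

Section Defs.
Variables (K : fieldType) (n : nat).
Local Notation S := {mpoly K[n]}.

(* A derivation delta = sum_i a_i d_i of S is represented by its coefficient
   family (a_i)_i on the basis d_i = d/dx_i. *)
Definition der := 'I_n -> S.

Definition der_app (delta : der) (g : S) : S :=
  \sum_(i < n) delta i * mderiv i g.

Definition mdvd (a b : S) : Prop := exists c : S, b = c * a.

Definition mirreducible (p : S) : Prop :=
  p != 0 /\ p \isn't a GRing.unit /\
  forall a b : S, p = a * b -> a \is a GRing.unit \/ b \is a GRing.unit.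

Definition inDge (g : S) (e : nat) (delta : der) : Prop :=
  mdvd (g ^+ e) (der_app delta g).

(* D(f) = intersection of D(f_i;e_i) over the irreducible factors f_i of f,
   e_i being the exact multiplicity of f_i in f. *)
Definition inDf (f : S) (delta : der) : Prop :=
  forall (p : S) (e : nat), mirreducible p -> (0 < e)%N ->
    mdvd (p ^+ e) f -> ~ mdvd (p ^+ e.+1) f -> inDge p e delta.

Definition wdeg (u : 'I_n -> int) (m : 'X_{1..n}) : int :=
  \sum_(i < n) u i * (m i)%:Z.

Definition is_wHomog (u : 'I_n -> int) (d : int) (Q : S) : Prop :=
  forall m : 'X_{1..n}, m \in msupp Q -> wdeg u m = d.

Definition wcomp (u : 'I_n -> int) (d : int) (p : S) : S :=
  \sum_(m <- msupp p | wdeg u m == d) p@_m *: 'X_[m].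

(* homogeneous component of degree d of delta in D^(u,v):
   deg(a d_i) = deg^u(a) + v_i *)
Definition der_comp (u v : 'I_n -> int) (d : int) (delta : der) : der :=
  fun i => wcomp u (d - v i) (delta i).

Definition graded_DQ (u v : 'I_n -> int) (Q : S) : Prop :=
  forall delta : der, inDf Q delta ->
    forall d : int, inDf Q (der_comp u v d delta).
End Defs.

(* Main.v *)
Require Import Defs.
From HB Require Import structures.
From mathcomp Require Import all_boot all_order all_algebra.
From mathcomp Require Import mpoly zify.
From Stdlib Require Import Classical.
Import Order.TTheory GRing.Theory Num.Theory.
Local Open Scope ring_scope.



Section Phi.
Variables (K : fieldType) (n : nat) (u : 'I_n -> int) (un : 'I_n -> nat).
Hypothesis hu : forall i, u i = (un i)%:Z.
Local Notation S := {mpoly K[n]}.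


Lemma polyX_decomp (P : {poly S}) : P != 0 -> exists A a, P = A * 'X^a /\ A`_0 != 0.
Proof.
elim: {P}(size P) {-2}P (erefl (size P)) => [|s IH] P sP nzP.
  by move: nzP; rewrite -size_poly_eq0 sP.
have [P00|P0n] := eqVneq P`_0 0; last by exists P, 0%N; rewrite expr0 mulr1.
have tP : take_poly 1 P = 0.
  by apply/polyP=> i; rewrite coef_poly coef0; case: i => [|i] //=; rewrite P00.
have EP := poly_take_drop 1 P; rewrite tP add0r in EP.
have nzD : drop_poly 1 P != 0 by apply: contraNneq nzP => D0; rewrite -EP D0 mul0r.
have [A [a [EA A0]]] : exists A a, drop_poly 1 P = A * 'X^a /\ A`_0 != 0.
  by apply: IH nzD; rewrite size_drop_poly sP subn1.
exists A, a.+1; split=> //; by rewrite -EP EA -mulrA -exprSr.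
Qed.

Lemma polyX_uniq (A B : {poly S}) a b : A * 'X^a = B * 'X^b -> A`_0 != 0 -> B`_0 != 0 ->
  A = B /\ a = b.
Proof.
move=> E A0 B0.
have h1 : (a <= b)%N.
  have := congr1 (fun P : {poly S} => P`_b) E; rewrite !coefMXn ltnn subnn.
  by case: ltnP => // _ H; move: B0; rewrite -H eqxx.
have h2 : (b <= a)%N.
  have := congr1 (fun P : {poly S} => P`_a) E; rewrite !coefMXn ltnn subnn.
  by case: ltnP => // _ H; move: A0; rewrite H eqxx.
have ab : a = b by apply/eqP; rewrite eqn_leq h1 h2.
subst b; split=> //; apply/polyP => i.
by have := congr1 (fun P : {poly S} => P`_(i + a)) E; rewrite /= !coefMXn ltnNge leq_addl /= addnK.
Qed.


Definition wd (m : 'X_{1..n}) : nat := (\sum_(i < n) un i * m i)%N.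

Lemma wdegE m : wdeg u m = (wd m)%:Z.
Proof. by rewrite /wdeg /wd (big_morph Posz PoszD (erefl 0%:Z)); apply: eq_bigr => i _; rewrite PoszM hu. Qed.

Definition cK : {rmorphism K -> {poly S}} := (polyC \o (@mpolyC n K))%FUN.
Definition hphi (i : 'I_n) : {poly S} := ('X_i)%:P * 'X^(un i).
Definition phi (p : S) : {poly S} := mmap cK hphi p.

Lemma phi1E m : mmap1 hphi m = ('X_[m])%:P * 'X^(wd m).
Proof.
rewrite /mmap1 /hphi mpolyXE_id rmorph_prod /wd -prodrXr -big_split /=.
by apply: eq_bigr => i _; rewrite exprMn rmorphXn -exprM.
Qed.

HB.instance Definition _ := GRing.RMorphism.copy phi (mmap cK hphi).

Lemma phiM p q : phi (p * q) = phi p * phi q. Proof. exact: rmorphM. Qed.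
Lemma phiD p q : phi (p + q) = phi p + phi q. Proof. exact: rmorphD. Qed.
Lemma phiB p q : phi (p - q) = phi p - phi q. Proof. exact: rmorphB. Qed.
Lemma phi0 : phi 0 = 0. Proof. exact: rmorph0. Qed.
Lemma phiXn p e : phi (p ^+ e) = phi p ^+ e. Proof. exact: rmorphXn. Qed.
Lemma phiMn p e : phi (p *+ e) = phi p *+ e. Proof. exact: rmorphMn. Qed.
Lemma phi_sum (I : Type) (r : seq I) (F : I -> S) :
  phi (\sum_(i <- r) F i) = \sum_(i <- r) phi (F i).
Proof. exact: rmorph_sum. Qed.

Lemma phiE p : phi p = \sum_(m <- msupp p) (p@_m *: 'X_[m])%:P * 'X^(wd m).
Proof.
rewrite /phi /mmap; elim/big_rec2: _ => [//|m a b _ ->]; rewrite phi1E /= mulrA -polyCM.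
by rewrite mul_mpolyC.
Qed.

Lemma coef_phi (N : nat) p : (phi p)`_N = wcomp u N p.
Proof.
rewrite phiE coef_sum /wcomp [RHS]big_mkcond /=; apply: eq_bigr => m _.
rewrite coefCM coefXn wdegE eqz_nat eq_sym.
by case: eqP => _; rewrite ?mulr1 ?mulr0.
Qed.

Lemma wcompN k (p : S) : wcomp u (Negz k) p = 0.
Proof. by rewrite /wcomp big1 // => m; rewrite wdegE. Qed.

Lemma wcompE D (p : S) : wcomp u D p = if D is Posz N then (phi p)`_N else 0.
Proof. by case: D => [N|k]; rewrite ?coef_phi ?wcompN. Qed.

Lemma phi_horner1 p : (phi p).[1] = p.
Proof.
rewrite phiE horner_sum [RHS]mpolyE; apply: eq_bigr => m _.
by rewrite hornerCM hornerXn expr1n mulr1.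
Qed.

Lemma phi_eq0 p : (phi p == 0) = (p == 0).
Proof.
apply/idP/idP => [/eqP h|/eqP ->]; last by rewrite phi0.
by rewrite -(phi_horner1 p) h horner0.
Qed.

Lemma phiC c : phi c%:MP = (c%:MP)%:P.
Proof. by rewrite /phi mmapC. Qed.

Lemma phiXi i : phi 'X_i = ('X_i)%:P * 'X^(un i).
Proof. by rewrite /phi mmapX mmap1U. Qed.

Lemma mcoeff_wcomp D (p : S) m : (wcomp u D p)@_m = if wdeg u m == D then p@_m else 0.
Proof.
rewrite /wcomp big_mkcond raddf_sum /=.
have E : forall m', (if wdeg u m' == D then p@_m' *: 'X_[m'] else 0)@_m =
   (if wdeg u m' == D then p@_m' else 0) * (m' == m)%:R.
  by move=> m'; case: ifP => _; rewrite ?mcoeff0 ?mul0r // mcoeffZ mcoeffX.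
under eq_bigr => m' _ do rewrite E.
have [mp|mnp] := boolP (m \in msupp p).
  rewrite (bigD1_seq m) ?msupp_uniq //= eqxx mulr1 big1 ?addr0 // => m' /negbTE ->.
  by rewrite mulr0.
rewrite big1_seq ?(memN_msupp_eq0 mnp); last first.
  move=> m' /andP[_ m'p]; have -> : (m' == m) = false.
    by apply/negbTE; apply: contraNneq mnp => <-.
  by rewrite mulr0.
by case: ifP.
Qed.

Definition homN (N : nat) (p : S) := phi p = p%:P * 'X^N.

Lemma homN_wH (N : nat) (p : S) : homN N p -> is_wHomog u N p.
Proof.
move=> h m mp; have := mcoeff_wcomp (wdeg u m) p m; rewrite eqxx wcompE wdegE h.
rewrite coefCM coefXn; case: eqP => [->//|_]; rewrite mulr0 mcoeff0 => /esym/eqP.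
by rewrite mcoeff_eq0 mp.
Qed.

Lemma wH_homN (N : nat) (p : S) : is_wHomog u N p -> homN N p.
Proof.
move=> h; rewrite /homN phiE.
rewrite (eq_big_seq (fun m => (p@_m *: 'X_[m])%:P * 'X^N)); last first.
  by move=> m mp; have := h m mp; rewrite wdegE => -[->].
by rewrite -mulr_suml -rmorph_sum -mpolyE.
Qed.

Lemma wH_nonneg d (p : S) : p != 0 -> is_wHomog u d p -> exists N : nat, d = N%:Z.
Proof.
rewrite -msupp_eq0; case E: (msupp p) => [|m s] // _ h.
by exists (wd m); rewrite -wdegE h // E mem_head.
Qed.

Lemma homN_wcomp (N : nat) (p : S) : homN N (wcomp u N p).
Proof.
apply: wH_homN => m; rewrite mcoeff_msupp mcoeff_wcomp.
by case: (wdeg u m =P N%:Z) => // _; rewrite eqxx.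
Qed.

Lemma homNM a b p q : homN a p -> homN b q -> homN (a + b) (p * q).
Proof.
rewrite /homN => hp hq; by rewrite phiM hp hq polyCM exprD mulrACA. Qed.

Lemma homNC c : homN 0 c%:MP.
Proof. by rewrite /homN phiC expr0 mulr1. Qed.

Lemma homNXi i : homN (un i) 'X_i.
Proof. by rewrite /homN phiXi. Qed.

Lemma homNX N p e : homN N p -> homN (N * e) (p ^+ e).
Proof. by rewrite /homN phiXn => ->; rewrite exprMn -rmorphXn -exprM. Qed.

Lemma wcompD D (p q : S) : wcomp u D (p + q) = wcomp u D p + wcomp u D q.
Proof. by rewrite !wcompE; case: D => [N|k]; rewrite ?addr0 // phiD coefD. Qed.

Lemma wcomp0 D : wcomp u D (0 : S) = 0.
Proof. by rewrite !wcompE; case: D => [N|k] //; rewrite phi0 coef0. Qed.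

Lemma wcomp_sum D (I : Type) (r : seq I) (F : I -> S) :
  wcomp u D (\sum_(i <- r) F i) = \sum_(i <- r) wcomp u D (F i).
Proof. exact: (big_morph _ (wcompD D) (wcomp0 D)). Qed.

Lemma wcomp_mulH D s (f h : S) : is_wHomog u s h ->
  wcomp u (D + s) (f * h) = wcomp u D f * h.
Proof.
have [->|nzh] := eqVneq h 0; first by rewrite !mulr0 wcomp0.
move=> hh; have [S' eS] := wH_nonneg _ _ nzh hh; subst s.
have hN := wH_homN _ _ hh.
rewrite !wcompE phiM hN mulrA; case: D => [N|k].
  by rewrite -PoszD /= coefMXn ltnNge leq_addl /= addnK coefMC.
case E: (Negz k + S'%:Z) => [M|k'] //; last by rewrite mul0r.
have : (M < S')%N by move: E; rewrite NegzE; lia.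
by rewrite coefMXn => ->; rewrite mul0r.
Qed.

Lemma wdD m1 m2 : wd (m1 + m2) = (wd m1 + wd m2)%N.
Proof. by rewrite /wd -big_split; apply: eq_bigr => i _; rewrite mnmDE mulnDr. Qed.

Lemma wdU i : wd U_(i) = un i.
Proof.
rewrite /wd (bigD1 i) //= big1 ?addn0; first by rewrite mnm1E eqxx muln1.
by move=> j /negbTE ji; rewrite mnm1E eq_sym ji muln0.
Qed.

Lemma wH_deriv (t : int) (p : S) i : is_wHomog u t p -> is_wHomog u (t - u i) (mderiv i p).
Proof.
move=> h m; rewrite mcoeff_msupp mcoeff_mderiv => nz.
have mp : (m + U_(i))%MM \in msupp p.
  by rewrite mcoeff_msupp; apply: contraNneq nz => ->; rewrite mul0rn.
have := h _ mp; rewrite !wdegE wdD wdU PoszD hu => <-.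
by rewrite addrK.
Qed.

Definition hx (i : 'I_n) : S := 'X_i *+ un i.
Definition Eu (p : S) : S := \sum_(i < n) hx i * mderiv i p.

Lemma homNhx i : homN (un i) (hx i).
Proof.
rewrite /homN /hx phiMn phiXi -mulrnAl; congr (_ * _).
by rewrite polyCMn.
Qed.

Lemma Eu_X m : Eu 'X_[m] = 'X_[m] *+ wd m.
Proof.
rewrite /Eu /wd -sumrMnr; apply: eq_bigr => i _.
rewrite mderivX scaler_nat /hx mulrnAl mulrnAr -mulrnA mulnC.
have [m0|mpos] := posnP (m i); first by rewrite m0 muln0 !mulr0n.
congr (_ *+ _); rewrite -mpolyXD; congr 'X_[_]; apply/mnmP => j.
rewrite mnmDE mnmBE mnm1E; case: eqP => [<-|_]; last by rewrite subn0.
by rewrite add1n subn1 prednK.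
Qed.

Lemma EuD p q : Eu (p + q) = Eu p + Eu q.
Proof. by rewrite /Eu -big_split; apply: eq_bigr => i _; rewrite mderivD mulrDr. Qed.

Lemma Eu0 : Eu 0 = 0.
Proof. by rewrite /Eu big1 // => i _; rewrite mderiv0 mulr0. Qed.

Lemma EuZ c p : Eu (c *: p) = c *: Eu p.
Proof. by rewrite /Eu scaler_sumr; apply: eq_bigr => i _; rewrite mderivZ scalerAr. Qed.

Lemma EuE p : Eu p = \sum_(m <- msupp p) (p@_m *: 'X_[m]) *+ wd m.
Proof.
rewrite {1}[p]mpolyE (big_morph _ EuD Eu0); apply: eq_bigr => m _.
by rewrite EuZ Eu_X scalerMnr.
Qed.

Lemma phiX m : phi 'X_[m] = ('X_[m])%:P * 'X^(wd m).
Proof. by rewrite /phi mmapX phi1E. Qed.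

Lemma phi_Eu p N : (phi (Eu p))`_N = (phi p)`_N *+ N.
Proof.
rewrite EuE phi_sum phiE coef_sum coef_sum -sumrMnl; apply: eq_bigr => m _.
rewrite phiMn -mul_mpolyC phiM phiC phiX mulrA -polyCM coefMn coefCM coefXn.
by case: eqP => [->|_]; rewrite ?mulr0 ?mul0rn // mul_mpolyC.
Qed.

Lemma homN_of_size (p : S) P0 b : phi p = P0 * 'X^b -> (size P0 <= 1)%N -> homN b p.
Proof.
move=> E sP; have E2 := size1_polyC sP; rewrite E2 in E.
have ep : p = P0`_0.
  by have := phi_horner1 p; rewrite E hornerCM hornerXn expr1n mulr1.
rewrite /homN E -ep; unfold reverse_coercion; reflexivity.
Qed.

Lemma hom_factor (Q c p : S) N : homN N Q -> Q != 0 -> Q = c * p -> exists t, homN t p.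
Proof.
move=> hQ nzQ EQ.
have nzc : c != 0 by apply: contraNneq nzQ => c0; rewrite EQ c0 mul0r.
have nzp : p != 0 by apply: contraNneq nzQ => p0; rewrite EQ p0 mulr0.
have nzpc : phi c != 0 by rewrite phi_eq0.
have nzpp : phi p != 0 by rewrite phi_eq0.
have [C0 [a [Ec C00]]] := polyX_decomp _ nzpc.
have [P0 [b [Ep P00]]] := polyX_decomp _ nzpp.
exists b; apply: (homN_of_size _ _ _ Ep).
have E : (Q%:P) * 'X^N = (C0 * P0) * 'X^(a + b).
  by rewrite -hQ EQ phiM Ec Ep exprD mulrACA.
have [E1 _] : C0 * P0 = Q%:P /\ (a + b)%N = N.
  apply: polyX_uniq; first by rewrite -E.
    by rewrite coef0M mulf_neq0.
  by rewrite coefC.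
have nzC0 : C0 != 0 by apply: contraNneq C00 => ->; rewrite coef0.
have nzP0 : P0 != 0 by apply: contraNneq P00 => ->; rewrite coef0.
have := congr1 (fun P : {poly S} => size P) E1; rewrite /= size_polyC nzQ size_mul //.
have := size_poly_gt0 C0; rewrite nzC0 => h1 h2.
set sC := size (polyseq C0) in h1 h2 *; set sP := size (polyseq P0) in h1 h2 *; lia.
Qed.


Hypothesis charK0 : [pchar K] =i pred0.

Lemma mulrn_neq0 (x : S) k : x != 0 -> (0 < k)%N -> x *+ k != 0.
Proof.
move=> nx k0; rewrite -mulr_natr mulf_neq0 // -mpolyC_nat mpolyC_eq0.
by rewrite ((pcharf0P _).1 charK0) -lt0n.
Qed.

Lemma nonhom_dec (p : S) : p != 0 -> ~ (exists N, homN N p) ->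
  exists P0 b, phi p = P0 * 'X^b /\ P0`_0 != 0 /\ (1 < size P0)%N.
Proof.
move=> nzp nh; have nzpp : phi p != 0 by rewrite phi_eq0.
have [P0 [b [E h0]]] := polyX_decomp _ nzpp.
exists P0, b; split=> //; split=> //; rewrite ltnNge; apply/negP => s.
by apply: nh; exists b; exact: homN_of_size _ _ _ E s.
Qed.

Lemma G_dec (p : S) P0 b : phi p = P0 * 'X^b -> P0`_0 != 0 -> (1 < size P0)%N ->
  exists G0 : {poly S}, phi (Eu p - p *+ (size (phi p)).-1) = G0 * 'X^b /\
     G0`_0 != 0 /\ (size G0 < size P0)%N.
Proof.
move=> E P00 s1.
have nzP0 : P0 != 0 by apply: contraNneq P00 => ->; rewrite coef0.
have sz : size (phi p) = (b + size P0)%N by rewrite E size_mulXn.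
set t0 := (size (phi p)).-1.
exists (\poly_(i < (size P0).-1) (P0`_i *+ (i + b) - P0`_i *+ t0)); split; [|split].
- apply/polyP => N; rewrite phiB phiMn coefB coefMn. have h := phi_Eu p N. rewrite [X in X - _]h.
  rewrite E !coefMXn.
  case: ltnP => Nb; first by rewrite !mul0rn subrr.
  rewrite coef_poly; case: ltnP => hj; first by rewrite subnK.
  have ht0 : t0 = (b + (size P0).-1)%N by rewrite /t0 sz; move: s1; set sP := size (polyseq P0); lia.
  have [hlt|heq] : ((size P0).-1 < N - b)%N \/ (N - b)%N = (size P0).-1.
    by move: hj; set sP := size (polyseq P0); lia.
    by rewrite nth_default ?mul0rn ?subrr //; move: hlt; set sP := size (polyseq P0); lia.
  have -> : N = t0 by rewrite ht0 -heq subnKC.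
  by rewrite subrr.
- rewrite coef_poly; have -> : (0 < (size P0).-1)%N by move: s1; set sP := size (polyseq P0); lia.
  have ht0 : t0 = (b + (size P0).-1)%N by rewrite /t0 sz; move: s1; set sP := size (polyseq P0); lia.
  rewrite ht0 add0n mulrnDr opprD addrA subrr add0r oppr_eq0 mulrn_neq0 //.
  by move: s1; set sP := size (polyseq P0); lia.
- apply: leq_ltn_trans (size_poly _ _) _; move: s1; set sP := size (polyseq P0); lia.
Qed.

Lemma no_div (p Qt c : S) N : homN N Qt -> Qt != 0 -> p != 0 ->
  ~ (exists t, homN t p) ->
  Qt * (Eu p - p *+ (size (phi p)).-1) = c * p -> False.
Proof.
move=> hQ nzQ nzp nh E.
have [P0 [b [Ep [P00 s1]]]] := nonhom_dec p nzp nh.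
have [G0 [EG [G00 sG]]] := G_dec p P0 b Ep P00 s1.
move: E EG; set G := Eu p - _ => E EG.
have nzG : G != 0.
  apply: contraNneq G00 => G0e; move: EG; rewrite G0e phi0 => /(congr1 (fun P : {poly S} => P`_b)).
  by rewrite coefMXn ltnn subnn coef0 => <-.
have nzc : c != 0.
  by apply: contraTneq (mulf_neq0 nzQ nzG) => c0; rewrite E c0 mul0r eqxx.
have nzpc : phi c != 0 by rewrite phi_eq0.
have [C0 [a [Ec C00]]] := polyX_decomp _ nzpc.
have E2 : (Qt%:P * G0) * 'X^(N + b) = (C0 * P0) * 'X^(a + b).
  have := congr1 phi E; rewrite !phiM hQ EG Ec Ep !exprD => E'.
  by rewrite [LHS]mulrACA [RHS]mulrACA.
have [E3 _] : Qt%:P * G0 = C0 * P0 /\ (N + b)%N = (a + b)%N.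
  apply: polyX_uniq E2 _ _; rewrite coef0M ?coefC mulf_neq0 //.
have nzC0 : C0 != 0 by apply: contraNneq C00 => ->; rewrite coef0.
have nzP0 : P0 != 0 by apply: contraNneq P00 => ->; rewrite coef0.
have := congr1 (fun P : {poly S} => size P) E3; rewrite /= size_Cmul // size_mul //.
have := size_poly_gt0 C0; rewrite nzC0 => h1 h2; move: sG.
rewrite h2; set sC := size (polyseq C0) in h1 *; set sP := size (polyseq P0); lia.
Qed.

Lemma msize_gt0 (p : S) : p != 0 -> (0 < msize p)%N.
Proof. by move=> nz; rewrite lt0n msize_poly_eq0. Qed.

Lemma unit_hom (p : S) : p \is a GRing.unit -> exists N, homN N p.
Proof.
move=> up; have nzp : p != 0 by apply: contraTneq up => ->; rewrite unitr0.
have nzi : p^-1 != 0 by rewrite invr_eq0.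
have := congr1 (fun x : S => msize x) (mulrV up); rewrite /= msizeM // msize1.
have := msize_gt0 _ nzi; have := msize_gt0 _ nzp => h1 h2 h3.
have : (msize p <= 1)%N.
  move: h1 h2 h3; set a := msize p; set b := msize p^-1. lia.
move/msize1_polyC => ->; exists 0%N; exact: homNC.
Qed.

Lemma const_unit c : c != 0 -> (c%:MP : S) \is a GRing.unit.
Proof.
move=> nc; apply/unitrP; exists (c^-1)%:MP.
by rewrite -!mpolyCM mulVf // mulfV // mpolyC1.
Qed.

Lemma small_unit (p : S) : p != 0 -> (msize p <= 1)%N -> p \is a GRing.unit.
Proof.
move=> nzp /msize1_polyC E; rewrite E const_unit //.
by apply: contraNneq nzp => h; rewrite E h mpolyC0.
Qed.

Lemma mdvd_mulr (a b c : S) : mdvd a b -> mdvd a (c * b).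
Proof. by case=> d ->; exists (c * d); rewrite mulrA. Qed.

Lemma mdvd_mull (a b c : S) : mdvd a b -> mdvd a (b * c).
Proof. by move=> h; rewrite mulrC; apply: mdvd_mulr. Qed.

Lemma mdvd_trans (a b c : S) : mdvd a b -> mdvd b c -> mdvd a c.
Proof. by case=> d -> [e ->]; exists (e * d); rewrite mulrA. Qed.

Lemma factor_exists k : forall Q : S, (msize Q < k)%N -> Q != 0 ->
  ~ (exists t, homN t Q) ->
  exists p, mirreducible p /\ mdvd p Q /\ ~ (exists t, homN t p).
Proof.
elim: k => [|k IH] Q // sQ nzQ nh.
case: (classic (mirreducible Q)) => [irr|nirr].
  by exists Q; split=> //; split=> //; exists 1; rewrite mul1r.
have nuQ : Q \isn't a GRing.unit by apply/negP => /unit_hom.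
have [a [b [Eab [na nb]]]] : exists a b, Q = a * b /\
    a \isn't a GRing.unit /\ b \isn't a GRing.unit.
  apply: NNPP => H; apply: nirr; split=> //; split=> // a b E.
  case: (boolP (a \is a GRing.unit)) => ua; first by left.
  case: (boolP (b \is a GRing.unit)) => ub; first by right.
  by exfalso; apply: H; exists a, b.
have nza : a != 0 by apply: contraNneq nzQ => a0; rewrite Eab a0 mul0r.
have nzb : b != 0 by apply: contraNneq nzQ => b0; rewrite Eab b0 mulr0.
have sa : (1 < msize a)%N.
  by rewrite ltnNge; apply: contra na => h; apply: small_unit.
have sb : (1 < msize b)%N.
  by rewrite ltnNge; apply: contra nb => h; apply: small_unit.
have sQab : msize Q = (msize a + msize b).-1 by rewrite Eab msizeM.
have ha' : (msize a < k)%N /\ (msize b < k)%N.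
  move: sQ sa sb sQab; set x := msize Q; set y := msize a; set z := msize b; lia.
case: (classic (exists t, homN t a)) => [[ta ha]|nha].
  have nhb : ~ (exists t, homN t b).
    by case=> tb hb; apply: nh; exists (ta + tb)%N; rewrite Eab; apply: homNM.
  have [p [ip [dp np]]] := IH b ha'.2 nzb nhb.
  by exists p; split=> //; split=> //; rewrite Eab; apply: mdvd_mulr.
have [p [ip [dp np]]] := IH a ha'.1 nza nha.
by exists p; split=> //; split=> //; rewrite Eab; apply: mdvd_mull.
Qed.

Lemma msize_dvd (A Q : S) : Q != 0 -> mdvd A Q -> (msize A <= msize Q)%N.
Proof.
move=> nzQ [c E]; have nzc : c != 0 by apply: contraNneq nzQ => c0; rewrite E c0 mul0r.
have nzA : A != 0 by apply: contraNneq nzQ => a0; rewrite E a0 mulr0.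
rewrite E msizeM //; have := msize_gt0 _ nzc; set x := msize c; set y := msize A; lia.
Qed.

Lemma msize_exp (p : S) m : p != 0 -> (m + 1 <= msize (p ^+ m) + m * (2 - msize p))%N.
Proof.
move=> nzp; elim: m => [|m IH]; first by rewrite expr0 msize1.
rewrite exprS msizeM ?expf_neq0 //; have := msize_gt0 _ nzp; move: IH.
set x := msize p; set y := msize (p ^+ m); lia.
Qed.

Lemma mult_exists (p Q : S) : Q != 0 -> (1 < msize p)%N -> mdvd p Q ->
  exists e, (0 < e)%N /\ mdvd (p ^+ e) Q /\ ~ mdvd (p ^+ e.+1) Q.
Proof.
move=> nzQ sp dp.
have nzp : p != 0 by apply: contraTneq sp => ->; rewrite msize0.
suff H : forall k m, (k + m = msize Q)%N -> (0 < m)%N -> mdvd (p ^+ m) Q ->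
   exists e, (0 < e)%N /\ mdvd (p ^+ e) Q /\ ~ mdvd (p ^+ e.+1) Q.
  have := msize_gt0 _ nzQ => hQ.
  apply: (H (msize Q - 1)%N 1%N) => //.
    by move: hQ; set z := msize Q; lia.
elim=> [|k IH] m hkm m0 dm.
  exists m; split=> //; split=> // dm1.
  have := msize_dvd _ _ nzQ dm1; have := msize_exp p m.+1 nzp; move: hkm sp.
  set x := msize p; set y := msize (p ^+ m.+1); set z := msize Q; lia.
case: (classic (mdvd (p ^+ m.+1) Q)) => [dm1|ndm1]; last by exists m.
by apply: (IH m.+1) => //; move: hkm; set z := msize Q; lia.
Qed.

Lemma dir1 (Q : S) : Q != 0 -> (exists d, is_wHomog u d Q) ->
  forall v, (exists k, forall i, u i + v i = k) -> graded_DQ u v Q.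
Proof.
move=> nzQ [d hd] v [k hk] dl hdl D p e irr e0 dv ndv.
have [N eN] := wH_nonneg _ _ nzQ hd; subst d.
have hQ := wH_homN _ _ hd.
have [c Ec] := hdl p e irr e0 dv ndv.
have [t ht] : exists t, homN t p.
  case: dv => q Eq; case: e e0 Eq ndv Ec => // e' _ Eq _ _.
  by apply: (hom_factor Q (q * p ^+ e') p N hQ nzQ); rewrite Eq exprSr mulrA.
exists (wcomp u (D - k + t%:Z - (t * e)%N%:Z) c).
rewrite /der_app /der_comp.
have step : forall i, wcomp u (D - v i) (dl i) * mderiv i p =
    wcomp u (D - k + t%:Z) (dl i * mderiv i p).
  move=> i; have -> : D - k + t%:Z = (D - v i) + (t%:Z - u i).
    by rewrite -(hk i); lia.
  by rewrite wcomp_mulH //; apply: wH_deriv; apply: homN_wH.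
under eq_bigr do rewrite step.
rewrite -(big_morph _ (wcompD (D - k + t%:Z)) (wcomp0 (D - k + t%:Z))).
have Ec' : \sum_(i < n) dl i * mderiv i p = c * p ^+ e := Ec.
rewrite Ec'.
rewrite -(wcomp_mulH (D - k + t%:Z - (t * e)%N%:Z) ((t * e)%N%:Z) c (p ^+ e)).
  by rewrite subrK.
by apply: homN_wH; apply: homNX.
Qed.

Lemma dir2 (Q : S) : Q != 0 ->
  (forall v, (exists k, forall i, u i + v i = k) -> graded_DQ u v Q) ->
  exists d, is_wHomog u d Q.
Proof.
move=> nzQ H; apply: NNPP => nhd.
have nh : ~ exists t, homN t Q by case=> t ht; apply: nhd; exists t; apply: homN_wH.
have [p [irr [dpQ nhp]]] := factor_exists (msize Q).+1 Q (ltnSn _) nzQ nh.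
have nzp : p != 0 by case: irr.
have sp : (1 < msize p)%N.
  rewrite ltnNge; apply/negP => /msize1_polyC E; apply: nhp; exists 0%N.
  by rewrite E; exact: homNC.
have [e [e0 [de nde]]] := mult_exists p Q nzQ sp dpQ.
pose v := fun i => - u i.
pose dl : der K n := fun i => Q * hx i.
have hdl : inDf Q dl.
  move=> p' e' _ _ [c Ec] _; exists (c * Eu p'); rewrite /der_app.
  have -> : \sum_(i < n) dl i * mderiv i p' = Q * Eu p'.
    by rewrite /Eu mulr_sumr; apply: eq_bigr => i _; rewrite mulrA.
  by rewrite Ec mulrAC.
have Hg : graded_DQ u v Q by apply: H; exists 0 => i; rewrite /v subrr.
pose T := (size (phi Q)).-1.
have [c1 Ec1] := Hg dl hdl T%:Z p e irr e0 de nde.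
pose Qt := wcomp u T Q.
have hQt : homN T Qt := homN_wcomp T Q.
have nzQt : Qt != 0.
  by rewrite /Qt wcompE -lead_coefE lead_coef_eq0 phi_eq0.
have E1 : der_app (der_comp u v T dl) p = Qt * Eu p.
  rewrite /der_app /der_comp /Eu mulr_sumr; apply: eq_bigr => i _.
  rewrite /v /dl opprK wcomp_mulH ?mulrA //.
  by rewrite hu; apply: homN_wH; apply: homNhx.
case: e e0 de nde Ec1 => // e' _ _ _ Ec1.
apply: (no_div p Qt (c1 * p ^+ e' - Qt *+ (size (phi p)).-1) T hQt nzQt nzp nhp).
by rewrite mulrBr mulrBl -E1 Ec1 exprSr mulrA mulrnAr mulrnAl.
Qed.

End Phi.

Theorem mainTheorem5 (K : fieldType) (n : nat)
  (charK0 : [pchar K] =i pred0)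
  (Q : {mpoly K[n]}) (Q_neq0 : Q != 0)
  (u : 'I_n -> int) (u_pos : forall i, 0 < u i) :
  (exists d : int, is_wHomog u d Q) <->
  (forall v : 'I_n -> int, (exists k : int, forall i, u i + v i = k) ->
     graded_DQ u v Q).
Proof.
pose un := fun i => `|u i|%N.
have hu : forall i, u i = (un i)%:Z by move=> i; rewrite /un /= gtz0_abs.
split.
  exact: (dir1 K n u un hu Q Q_neq0).
exact: (dir2 K n u un hu charK0 Q Q_neq0).
Qed.
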